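(* For any idempotent $e$ of a semigroup $S$, $$\big(\sqrt[\infty]{H_e}\cdot H_e\big)\cup\big(H_e\cdot \sqrt[\infty]{H_e}\big)\subseteq H_e .$$
   Context: For a subset $A$ of a semigroup $S$, $\sqrt[\infty]{A}=\{x\in S:\exists n\in\mathbb N\ (x^n\in A)\}$. $S^1=S\cup\{1\}$ with $1$ an adjoined identity. For $a\in S$, $H_a=\{x\in S: xS^1=aS^1 \text{ and } S^1x=S^1a\}$ is the $\mathcal H$-class of $a$; for an idempotent $e$, $H_e$ is the maximal subgroup of $S$ containing $e$. For sets $A,B\subseteq S$, $A\cdot B=\{ab:a\in A,b\in B\}$. *)

(* Defs.v *)
(* A semigroup is a carrier type T with an associative binary
   operation mul; it is passed as explicit binders in the theorem. Subsets of
   S are predicates T -> Prop. *)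
From Stdlib Require Import Arith.
Set Implicit Arguments.
Unset Strict Implicit.

Section Semigroup.
Variables (T : Type) (mul : T -> T -> T).

(* y \in x S^1  (S^1 = S with an adjoined identity) *)
Definition in_rideal1 (x y : T) : Prop := y = x \/ exists s, y = mul x s.
Definition in_lideal1 (x y : T) : Prop := y = x \/ exists s, y = mul s x.

Definition Hclass (a : T) : T -> Prop :=
  fun x => (forall y, in_rideal1 x y <-> in_rideal1 a y) /\
           (forall y, in_lideal1 x y <-> in_lideal1 a y).

(* positive powers: spow x n = x^n for n >= 1 (spow x 0 = x, unused) *)
Definition spow (x : T) (n : nat) : T := Nat.iter (Nat.pred n) (mul x) x.

Definition inf_root (A : T -> Prop) : T -> Prop :=
  fun x => exists n, 1 <= n /\ A (spow x n).

Definition setmul (A B : T -> Prop) : T -> Prop :=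
  fun z => exists a b, A a /\ B b /\ z = mul a b.

End Semigroup.

(* Main.v *)
Require Import Defs.
From Stdlib Require Import Arith Lia.

Section S.
Variables (T : Type) (mul : T -> T -> T)
  (mulA : forall x y z, mul x (mul y z) = mul (mul x y) z)
  (e : T) (he : mul e e = e).

Lemma H_lft a : Hclass mul e a -> mul e a = a.
Proof.
  intros [R _]. destruct (proj1 (R a) (or_introl eq_refl)) as [E|[s E]].
  - subst; auto.
  - rewrite E, mulA, he; auto.
Qed.
Lemma H_rgt a : Hclass mul e a -> mul a e = a.
Proof.
  intros [_ L]. destruct (proj1 (L a) (or_introl eq_refl)) as [E|[s E]].
  - subst; auto.
  - rewrite E, <- mulA, he; auto.
Qed.
Lemma H_rinv a : Hclass mul e a -> exists t, mul a t = e.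
Proof.
  intros [R _]. destruct (proj2 (R e) (or_introl eq_refl)) as [E|[s E]].
  - exists e; subst; auto.
  - exists s; auto.
Qed.
Lemma H_linv a : Hclass mul e a -> exists t, mul t a = e.
Proof.
  intros [_ L]. destruct (proj2 (L e) (or_introl eq_refl)) as [E|[s E]].
  - exists e; subst; auto.
  - exists s; auto.
Qed.

Lemma crit z : mul e z = z -> mul z e = z -> (exists t, mul z t = e) ->
  (exists t, mul t z = e) -> Hclass mul e z.
Proof.
  intros H1 H2 [t Ht] [u Hu]. split; intro y; split.
  - intros [E|[s E]]; right.
    + exists z; subst; auto.
    + exists (mul z s); subst; rewrite mulA, H1; auto.
  - intros [E|[s E]]; right.
    + exists t; subst; auto.
    + exists (mul t s); rewrite E, mulA, Ht; auto.
  - intros [E|[s E]]; right.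
    + exists z; subst; auto.
    + exists (mul s z); subst; rewrite <- mulA, H2; auto.
  - intros [E|[s E]]; right.
    + exists u; subst; auto.
    + exists (mul s u); rewrite E, <- mulA, Hu; auto.
Qed.

Lemma H_mul a b : Hclass mul e a -> Hclass mul e b -> Hclass mul e (mul a b).
Proof.
  intros Ha Hb. apply crit.
  - rewrite mulA, (H_lft _ Ha); auto.
  - rewrite <- mulA, (H_rgt _ Hb); auto.
  - destruct (H_rinv _ Ha) as [a' Ea]; destruct (H_rinv _ Hb) as [b' Eb].
    exists (mul b' a'). rewrite <- mulA, (mulA b b' a'), Eb, mulA, (H_rgt _ Ha); auto.
  - destruct (H_linv _ Ha) as [a' Ea]; destruct (H_linv _ Hb) as [b' Eb].
    exists (mul b' a'). rewrite <- mulA, (mulA a' a b), Ea, (H_lft _ Hb); auto.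
Qed.

Lemma key x p g : mul x p = g -> mul p x = g -> Hclass mul e g ->
  Hclass mul e (mul x e) /\ Hclass mul e (mul e x).
Proof.
  intros Hxp Hpx Hg.
  destruct (H_rinv _ Hg) as [g' Eg']. destruct (H_linv _ Hg) as [g'' Eg''].
  assert (Ge : mul g e = g) by apply (H_rgt _ Hg).
  assert (eG : mul e g = g) by apply (H_lft _ Hg).
  assert (comm : forall y, mul y g = mul g y -> mul e (mul y e) = mul y e
                          /\ mul (mul e y) e = mul e y).
  { intros y Hy. split.
    - assert (E1 : mul y e = mul (mul g y) g') by (rewrite <- Hy, <- mulA, Eg'; auto).
      rewrite E1, mulA, mulA, eG; auto.
    - assert (E1 : mul e y = mul g'' (mul y g)) by (rewrite Hy, mulA, Eg''; auto).
      rewrite E1, <- mulA, <- mulA, Ge; auto. }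
  assert (xg : mul x g = mul g x) by (rewrite <- Hpx at 1; rewrite mulA, Hxp; auto).
  assert (pg : mul p g = mul g p) by (rewrite <- Hxp at 1; rewrite mulA, Hpx; auto).
  destruct (comm x xg) as [X1 X2]. destruct (comm p pg) as [P1 P2].
  split; apply crit.
  - exact X1.
  - rewrite <- mulA, he; auto.
  - exists (mul (mul p e) g'). rewrite mulA, <- (mulA x e), P1, mulA, Hxp, Ge; auto.
  - exists (mul g'' (mul e p)). rewrite <- mulA, <- (mulA e p), (mulA p x e), Hpx,
      (mulA e g e), eG, Ge; auto.
  - rewrite mulA, he; auto.
  - exact X2.
  - exists (mul (mul p e) g').
    assert (A : mul (mul e x) (mul p e) = g).
    { rewrite <- mulA, (mulA x p e), Hxp, Ge, eG; auto. }
    rewrite mulA, A; auto.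
  - exists (mul g'' (mul e p)).
    assert (A : mul (mul e p) (mul e x) = g).
    { rewrite mulA, P2, <- mulA, Hpx, eG; auto. }
    rewrite <- mulA, A; auto.
Qed.

Lemma L1 x m a b : mul (Nat.iter m (mul x) a) b = Nat.iter m (mul x) (mul a b).
Proof. induction m; simpl; auto. rewrite <- mulA, IHm; auto. Qed.

Lemma L2 x m y : Nat.iter m (mul x) (mul x y) = mul x (Nat.iter m (mul x) y).
Proof. induction m; simpl; auto. rewrite IHm; auto. Qed.

Lemma root_ex x : inf_root mul (Hclass mul e) x ->
  Hclass mul e (mul x e) /\ Hclass mul e (mul e x).
Proof.
  intros [n [Hn Hg]]. destruct n as [|m]; [lia|].
  unfold spow in Hg; simpl in Hg. set (g := Nat.iter m (mul x) x) in *.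
  assert (Pm : forall y, mul g y = mul x (Nat.iter m (mul x) y)).
  { intro y. unfold g. rewrite L1, L2; auto. }
  apply (@key x (Nat.iter m (mul x) g) (mul g g)).
  - rewrite Pm; auto.
  - rewrite L1. assert (mul g x = mul x g) by (rewrite Pm; reflexivity).
    rewrite H, L2, Pm; auto.
  - apply H_mul; auto.
Qed.

End S.

Theorem lemma3p1 (T : Type) (mul : T -> T -> T)
  (mulA : forall x y z, mul x (mul y z) = mul (mul x y) z)
  (e : T) (he : mul e e = e) :
  forall z,
    (setmul mul (inf_root mul (Hclass mul e)) (Hclass mul e) z \/
     setmul mul (Hclass mul e) (inf_root mul (Hclass mul e)) z) ->
    Hclass mul e z.
Proof.
  intros z [[a [b [Ha [Hb E]]]] | [a [b [Ha [Hb E]]]]]; subst z.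
  - destruct (root_ex _ _ mulA _ he _ Ha) as [W _].
    rewrite <- (H_lft _ _ mulA _ he _ Hb), mulA. apply H_mul; auto.
  - destruct (root_ex _ _ mulA _ he _ Hb) as [_ W].
    rewrite <- (H_rgt _ _ mulA _ he _ Ha), <- mulA. apply H_mul; auto.
Qed.
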